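(* Let $L:\mathbb{T}^d\times\mathbb{R}^d\to\mathbb{R}$ be continuous with $\lim_{|v|\to\infty}\inf_{x\in\mathbb{T}^d}L(x,v)/|v|=+\infty$, and let $(\varphi,\overline{H})$, with $\varphi:\mathbb{T}^d\to\mathbb{R}$ Lipschitz continuous and $\overline{H}\in\mathbb{R}$, be a supersolution to $H(x,-\nabla\varphi)=\overline{H}$. Given $\varepsilon>0$, there exist $\varkappa_0>0$ and a function $\delta:(0,\varkappa_0]\to(0,+\infty)$ such that for all $r>0$, $\varkappa\in(0,\varkappa_0]$, all partitions $\Delta$ of $[0,r]$ with $d(\Delta)\le\delta(\varkappa)$, and every $y\in\mathbb{T}^d$, \[\varphi(x_{y,\varkappa,r,\Delta}(r))+\int_0^rL(x_{y,\varkappa,r,\Delta}(t),v_{y,\varkappa,r,\Delta}(t))\,dt\le\varphi(y)-\overline{H}r+(r+1)\varepsilon.\]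
   Context: $\mathbb{T}^d=\mathbb{R}^d/\mathbb{Z}^d$; $x+v$ is the translate of $x\in\mathbb{T}^d$ by $v\in\mathbb{R}^d$. Vectors in $\mathbb{R}^d$ are columns, covectors rows. Hamiltonian: $H(x,p)=\max_{v\in\mathbb{R}^d}[pv-L(x,v)]$. Hadamard subdifferential: $p\in\partial_D^-\varphi(x)$ iff for all $w\in\mathbb{R}^d$, $\liminf_{h\downarrow0,w'\to w}\frac{\varphi(x+hw')-\varphi(x)}{h}\ge pw$. A pair $(\varphi,\overline{H})$ with $\varphi$ lower semicontinuous is a supersolution to $H(x,-\nabla\varphi)=\overline{H}$ if $H(x,-p)\ge\overline{H}$ for all $x\in\mathbb{T}^d$ and $p\in\partial_D^-\varphi(x)$. Moreau–Yosida transform: $\varphi_\varkappa(x)=\inf\{\varphi(x+v)+\frac{1}{2\varkappa^2}|v|^2:v\in\mathbb{R}^d\}$; $b_\varkappa[x]$ is a chosen vector with $\varphi(x+b_\varkappa[x])+\frac{1}{2\varkappa^2}|b_\varkappa[x]|^2=\varphi_\varkappa(x)$, $p_\varkappa[x]=\frac{1}{\varkappa^2}(-b_\varkappa[x])^\top$, and $\mathbbm{v}_\varkappa[x]$ is a chosen element of $\operatorname{Argmax}_{v\in\mathbb{R}^d}[-p_\varkappa[x]v-L(x+b_\varkappa[x],v)]$. For a partition $\Delta=\{t_i\}_{i=0}^n$, $0=t_0<\dots<t_n=r$, its fineness is $d(\Delta)=\max_i(t_{i+1}-t_i)$. For $y\in\mathbb{T}^d$ the motion and control are defined recursively: $x_{y,\varkappa,r,\Delta}(0)=y$;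 for $t\in[t_i,t_{i+1})$, $v_{y,\varkappa,r,\Delta}(t)=\mathbbm{v}_\varkappa[x_{y,\varkappa,r,\Delta}(t_i)]$, and for $t\in[t_i,t_{i+1}]$, $x_{y,\varkappa,r,\Delta}(t)=x_{y,\varkappa,r,\Delta}(t_i)+(t-t_i)\mathbbm{v}_\varkappa[x_{y,\varkappa,r,\Delta}(t_i)]$. *)

(* Defs.v *)
(* The torus T^d = R^d/Z^d is represented
   by Z^d-Zperiodic functions on R^d. *)
From HB Require Import structures.
From mathcomp Require Import all_boot all_order all_algebra.
From mathcomp Require Import all_classical all_reals all_analysis.
Set Implicit Arguments. Unset Strict Implicit. Unset Printing Implicit Defensive.
Import Order.TTheory GRing.Theory Num.Theory.
Import numFieldNormedType.Exports.
Local Open Scope ring_scope.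
Local Open Scope classical_set_scope.

Section Defs.
Variables (R : realType) (d : nat).

(* vectors are columns 'cV_d, covectors are rows 'rV_d *)
Definition enorm (v : 'cV[R]_d) : R := Num.sqrt (\sum_(i < d) v i 0 ^+ 2).

Definition pair_rv (p : 'rV[R]_d) (v : 'cV[R]_d) : R := (p *m v) 0 0.

Definition intvec (k : 'cV[R]_d) : Prop := forall i, exists z : int, k i 0 = z%:~R.

Definition Zperiodic (T : Type) (f : 'cV[R]_d -> T) : Prop :=
  forall x k, intvec k -> f (x + k) = f x.

Definition hamiltonian (L : 'cV[R]_d -> 'cV[R]_d -> R) (x : 'cV[R]_d) (p : 'rV[R]_d) : R :=
  sup [set pair_rv p v - L x v | v in [set: 'cV[R]_d]].

Definition hadamard_subdiff (phi : 'cV[R]_d -> R) (x : 'cV[R]_d) (p : 'rV[R]_d) : Prop :=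
  forall w : 'cV[R]_d, forall e : R, 0 < e ->
    exists eta : R, 0 < eta /\
      forall (h : R) (w' : 'cV[R]_d), 0 < h -> h < eta -> enorm (w' - w) < eta ->
        pair_rv p w - e <= (phi (x + h *: w') - phi x) / h.

Definition lower_semicont (phi : 'cV[R]_d -> R) : Prop :=
  forall x e, 0 < e -> exists eta, 0 < eta /\
    forall y, enorm (y - x) < eta -> phi x - e < phi y.

Definition supersolution (L : 'cV[R]_d -> 'cV[R]_d -> R) (phi : 'cV[R]_d -> R) (Hbar : R) : Prop :=
  lower_semicont phi /\
  forall x p, hadamard_subdiff phi x p -> Hbar <= hamiltonian L x (- p).

Definition moreau_yosida (phi : 'cV[R]_d -> R) (k : R) (x : 'cV[R]_d) : R :=
  inf [set phi (x + v) + (enorm v) ^+ 2 / (2 * k ^+ 2) | v in [set: 'cV[R]_d]].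

Definition Argmax (f : 'cV[R]_d -> R) : set 'cV[R]_d :=
  [set v | forall w, f w <= f v].

Definition p_of (b : R -> 'cV[R]_d -> 'cV[R]_d) (k : R) (x : 'cV[R]_d) : 'rV[R]_d :=
  (k ^+ 2)^-1 *: (- b k x)^T.

Fixpoint nodes (vv : R -> 'cV[R]_d -> 'cV[R]_d) (k : R) (t : nat -> R)
    (y : 'cV[R]_d) (i : nat) : 'cV[R]_d :=
  match i with
  | 0 => y
  | j.+1 => nodes vv k t y j + (t j.+1 - t j) *: vv k (nodes vv k t y j)
  end.

(* index i < n of the partition interval [t_i, t_{i+1}) containing s
   (the last interval is taken closed, so that the motion is also given at s = r) *)
Definition part_idx (n : nat) (t : nat -> R) (s : R) : nat :=
  \max_(i < n | (t i <= s)%R) (i : nat).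

Definition motion (vv : R -> 'cV[R]_d -> 'cV[R]_d) (k : R) (n : nat) (t : nat -> R)
    (y : 'cV[R]_d) (s : R) : 'cV[R]_d :=
  let i := part_idx n t s in nodes vv k t y i + (s - t i) *: vv k (nodes vv k t y i).

Definition control (vv : R -> 'cV[R]_d -> 'cV[R]_d) (k : R) (n : nat) (t : nat -> R)
    (y : 'cV[R]_d) (s : R) : 'cV[R]_d :=
  vv k (nodes vv k t y (part_idx n t s)).

Definition time_partition (n : nat) (t : nat -> R) (r : R) : Prop :=
  t 0%N = 0 /\ t n = r /\ forall i, (i < n)%N -> t i < t i.+1.

Definition fineness_le (n : nat) (t : nat -> R) (delta : R) : Prop :=
  forall i, (i < n)%N -> t i.+1 - t i <= delta.

End Defs.

(* Main.v *)
Require Import Defs.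
From HB Require Import structures.
From mathcomp Require Import all_boot all_order all_algebra.
From mathcomp Require Import all_classical all_reals all_analysis.
From mathcomp Require Import ring lra.
Import Order.TTheory GRing.Theory Num.Theory.
Import numFieldNormedType.Exports.
Local Open Scope ring_scope.
Local Open Scope classical_set_scope.
Section LinAlg.
Context {R : realType} {d : nat}.
Implicit Types u v w : 'cV[R]_d.

Definition dot u v : R := \sum_(i < d) u i 0 * v i 0.

Lemma dot_ge0 v : 0 <= dot v v.
Proof. by apply: sumr_ge0 => i _; rewrite -expr2 sqr_ge0. Qed.

Lemma enorm_ge0 v : 0 <= enorm v.
Proof. exact: sqrtr_ge0. Qed.

Lemma enorm_sq v : enorm v ^+ 2 = dot v v.
Proof.
rewrite /enorm sqr_sqrtr; first by apply: eq_bigr => i _; rewrite expr2.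
by apply: sumr_ge0 => i _; rewrite sqr_ge0.
Qed.

Lemma dotC u v : dot u v = dot v u.
Proof. by apply: eq_bigr => i _; rewrite mulrC. Qed.

Lemma dotDl u v w : dot (u + v) w = dot u w + dot v w.
Proof. by rewrite /dot -big_split; apply: eq_bigr => i _; rewrite !mxE mulrDl. Qed.

Lemma dotDr u v w : dot w (u + v) = dot w u + dot w v.
Proof. by rewrite dotC dotDl !(dotC w). Qed.

Lemma dotZl a u v : dot (a *: u) v = a * dot u v.
Proof. by rewrite /dot mulr_sumr; apply: eq_bigr => i _; rewrite !mxE mulrA. Qed.

Lemma dotZr a u v : dot u (a *: v) = a * dot u v.
Proof. by rewrite dotC dotZl dotC. Qed.

Lemma dotNl u v : dot (- u) v = - dot u v.
Proof. by rewrite -scaleN1r dotZl mulN1r. Qed.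

Lemma dotNr u v : dot u (- v) = - dot u v.
Proof. by rewrite dotC dotNl dotC. Qed.

Lemma dotBl u v w : dot (u - v) w = dot u w - dot v w.
Proof. by rewrite dotDl dotNl. Qed.

Lemma dotBr u v w : dot w (u - v) = dot w u - dot w v.
Proof. by rewrite dotDr dotNr. Qed.

Lemma dot0_eq v : dot v v = 0 -> forall i, v i 0 = 0.
Proof.
move=> /eqP; rewrite psumr_eq0; last by move=> i _; rewrite -expr2 sqr_ge0.
move=> /allP H i; have := H i (mem_index_enum _).
by rewrite -expr2 sqrf_eq0 => /eqP.
Qed.

Lemma dot_sq_le u v : dot u v ^+ 2 <= dot u u * dot v v.
Proof.
have [c0|c0] := eqVneq (dot v v) 0.
  have -> : dot u v = 0.
    by rewrite /dot big1 // => i _; rewrite (dot0_eq _ c0) mulr0.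
  by rewrite c0 mulr0 expr0n.
have cpos : 0 < dot v v by rewrite lt_def c0 dot_ge0.
set l := dot u v / dot v v.
have := dot_ge0 (u - l *: v).
rewrite !dotBl !dotBr !dotZl !dotZr (dotC v u).
rewrite /l => H.
have : 0 <= (dot u u - dot u v ^+ 2 / dot v v).
  move: H; set a := dot u u; set bb := dot u v; set c := dot v v.
  suff -> : a - bb / c * bb - (bb / c * bb - bb / c * (bb / c * c)) = a - bb ^+ 2 / c by [].
  by field; rewrite c0.
by rewrite subr_ge0 ler_pdivrMr // mulrC.
Qed.

Lemma CS u v : `|dot u v| <= enorm u * enorm v.
Proof.
rewrite -(@ler_pXn2r _ 2) //; last by rewrite nnegrE mulr_ge0 ?enorm_ge0.
by rewrite exprMn !enorm_sq real_normK ?num_real // dot_sq_le.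
Qed.

Lemma enorm_expand u v : enorm (u + v) ^+ 2 = enorm u ^+ 2 + 2 * dot u v + enorm v ^+ 2.
Proof. rewrite !enorm_sq dotDl !dotDr (dotC v u); ring. Qed.

Lemma enormD u v : enorm (u + v) <= enorm u + enorm v.
Proof.
rewrite -(@ler_pXn2r _ 2) //; try by rewrite nnegrE ?addr_ge0 ?enorm_ge0.
rewrite enorm_expand sqrrD lerD2r lerD2l.
have := CS u v; have := ler_norm (dot u v); lra.
Qed.

Lemma enormZ a v : enorm (a *: v) = `|a| * enorm v.
Proof.
apply/eqP; rewrite -(@eqrXn2 _ 2) //; try by rewrite ?mulr_ge0 ?enorm_ge0.
by rewrite exprMn !enorm_sq dotZl dotZr mulrA -expr2 real_normK ?num_real.
Qed.

Lemma enormN v : enorm (- v) = enorm v.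
Proof. by rewrite -scaleN1r enormZ normrN normr1 mul1r. Qed.

Lemma enormB u v : enorm (u - v) = enorm (v - u).
Proof. by rewrite -enormN opprB. Qed.

Lemma enorm0 : enorm (0 : 'cV[R]_d) = 0.
Proof. by rewrite /enorm big1 ?sqrtr0 // => i _; rewrite mxE expr0n. Qed.

Lemma entry_le_enorm v i : `|v i 0| <= enorm v.
Proof.
rewrite -(@ler_pXn2r _ 2) //; try by rewrite nnegrE ?enorm_ge0.
rewrite enorm_sq real_normK ?num_real // /dot (bigD1 i) //= -expr2 lerDl.
by apply: sumr_ge0 => j _; rewrite -expr2 sqr_ge0.
Qed.

Lemma mxnorm_le_enorm v : `|v| <= enorm v.
Proof.
rewrite [leLHS]/Num.norm /= mx_normrE.
apply/bigmax_leP; split; first exact: enorm_ge0.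
by move=> [i j] _ /=; rewrite (ord1 j); exact: entry_le_enorm.
Qed.

End LinAlg.
Section Compact.
Context {R : realType}.

Lemma ball_prodP (U V : normedModType R) (x y : U * V) r :
  ball x r y <-> `|x.1 - y.1| < r /\ `|x.2 - y.2| < r.
Proof. rewrite /ball /= /prod_ball -!ball_normE. by []. Qed.

Lemma unif_cont_compact (U V : normedModType R) (f : U * V -> R) (A : set (U * V)) :
  compact A -> continuous f -> forall e, 0 < e ->
  exists2 eta, 0 < eta & forall w w', A w -> `|w'.1 - w.1| < eta ->
     `|w'.2 - w.2| < eta -> `|f w - f w'| < e.
Proof.
move=> cA cf e e0.
have := (proj1 (compact_near_coveringP A) cA R (0:R)^'+
  (fun eta w => forall w', `|w'.1 - w.1| < eta ->
     `|w'.2 - w.2| < eta -> `|f w - f w'| < e) _).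
case.
- move=> x Ax.
  have := cf x; move/cvgrPdist_lt => /(_ (e/2)).
  have e20 : 0 < e / 2 by rewrite divr_gt0.
  move=> /(_ e20) /nbhs_ballP [r /= r0 Hr].
  have r20 : 0 < r / 2 by rewrite divr_gt0.
  exists (ball x (r/2), [set y : R | 0 < y < r/2]).
    split; first exact: nbhsx_ballx.
    rewrite /=; near=> y; apply/andP; split.
      by near: y; exact: nbhs_right_gt.
    by near: y; exact: nbhs_right_lt.
  move=> [w eta] /= [/ball_prodP [h1 h2] /andP [eta0 etar]] w' H1 H2.
  have B1 : ball x r w.
    by apply/ball_prodP; split; lra.
  have B2 : ball x r w'.
    apply/ball_prodP; split.
      have := ler_normD (x.1 - w.1) (w.1 - w'.1); rewrite distrC in H1.
      rewrite addrA subrK; lra.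
    have := ler_normD (x.2 - w.2) (w.2 - w'.2); rewrite distrC in H2.
    rewrite addrA subrK; lra.
  have := Hr _ B1; have := Hr _ B2 => /= c1 c2.
  have := ler_normD (f w - f x) (f x - f w'); rewrite addrA subrK.
  rewrite (distrC (f w) (f x)); lra.
- move=> x /= x0 Hx; exists (x / 2); first by rewrite divr_gt0.
  move=> w w' Aw H1 H2; apply: (Hx (x/2)) => //; last by rewrite divr_gt0.
  rewrite /ball_ /= sub0r normrN gtr0_norm ?divr_gt0 //; lra.
Unshelve. all: by end_near.
Qed.
End Compact.
Section Cube.
Context {R : realType}.

Lemma mxnorm_entry m n (M : 'M[R]_(m, n)) i j : `|M i j| <= `|M|.
Proof.
rewrite [leRHS]/Num.norm /= mx_normrE.
by apply/bigmax_geP; right; exists (i, j).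
Qed.

Lemma mxnorm_tr m n (M : 'M[R]_(m, n)) : `|M^T| <= `|M|.
Proof.
rewrite [leLHS]/Num.norm /= mx_normrE.
apply/bigmax_leP; split => //=.
by move=> [i j] _ /=; rewrite mxE; exact: mxnorm_entry.
Qed.

Lemma trmx_cont m n : continuous (fun M : 'M[R]_(m, n) => M^T).
Proof.
move=> M; apply/(@cvg_ballP _ _ _ (nbhs M) (nbhs_filter M)) => e e0.
apply/nbhs_ballP; exists e => // N; rewrite -!ball_normE /ball_ /= => HN.
rewrite -linearB /=; have H := @mxnorm_tr m n (M - N)%R; exact: le_lt_trans H HN.
Qed.

Definition cube (d : nat) (a b : R) : set 'cV[R]_d := [set v | forall i, a <= v i 0 <= b].

Lemma cube_compact d a b : compact (cube d a b).
Proof.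
have -> : cube d a b = (fun M : 'rV[R]_d => M^T) @`
   [set v : 'rV[R]_d | forall i, `[a, b]%classic (v ord0 i)].
  apply/seteqP; split => v /=.
    move=> Hv; exists v^T; last by rewrite trmxK.
    by move=> i; rewrite mxE /= in_itv /= Hv.
  move=> [w Hw <-] i; rewrite mxE; have := Hw i.
  by rewrite /= in_itv.
apply: (@continuous_compact _ _ (fun M : 'rV[R]_d => M^T)).
  apply: continuous_subspaceT => x; exact: trmx_cont.
apply: (@rV_compact _ d (fun _ => `[a, b]%classic)) => i; exact: segment_compact.
Qed.
End Cube.
Section Periodic.
Context {R : realType} {d : nat}.

Lemma reduce (x : 'cV[R]_d) : exists k, intvec k /\ @cube R d 0 1 (x - k).
Proof.
exists (\col_i ((Num.floor (x i 0))%:~R)); split.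
  by move=> i; exists (Num.floor (x i 0)); rewrite mxE.
move=> i; rewrite !mxE subr_ge0 floor_le /=.
have := floorD1_gt (x i 0); rewrite intrD; lra.
Qed.

Lemma periodic_sub {T} {f : 'cV[R]_d -> T} {x k} : Zperiodic f -> intvec k -> f (x - k) = f x.
Proof. by move=> Pf ik; rewrite -(Pf (x - k) k ik) subrK. Qed.

Lemma cube_enorm (v : 'cV[R]_d) V : enorm v <= V -> @cube R d (- V) V v.
Proof.
move=> H i; have := entry_le_enorm v i; rewrite ler_norml => /andP [h1 h2].
apply/andP; split; lra.
Qed.

Lemma L_uc (L : 'cV[R]_d -> 'cV[R]_d -> R) :
  (forall v, Zperiodic (fun x => L x v)) ->
  continuous (fun z : 'cV[R]_d * 'cV[R]_d => L z.1 z.2) ->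
  forall V e, 0 < e -> exists2 eta, 0 < eta & forall x x' v, enorm v <= V ->
    enorm (x' - x) < eta -> `|L x v - L x' v| < e.
Proof.
move=> Lper Lc V e e0.
have cA : compact (@cube R d 0 1 `*` @cube R d (- V) V).
  by apply: compact_setX; exact: cube_compact.
have [eta eta0 H] := @unif_cont_compact R _ _ _ _ cA Lc e e0.
exists eta => // x x' v Hv Hx.
have [k [ik ck]] := reduce x.
have e1 : L (x - k) v = L x v := periodic_sub (Lper v) ik.
have e2 : L (x' - k) v = L x' v := periodic_sub (Lper v) ik.
rewrite -e1 -e2; apply: (H (x - k, v) (x' - k, v)) => /=.
- by split => //; exact: cube_enorm.
- by rewrite opprB addrA subrK; apply: le_lt_trans (mxnorm_le_enorm _) Hx.
- by rewrite subrr normr0.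
Qed.

Lemma L0_bound (L : 'cV[R]_d -> 'cV[R]_d -> R) :
  (forall v, Zperiodic (fun x => L x v)) ->
  continuous (fun z : 'cV[R]_d * 'cV[R]_d => L z.1 z.2) ->
  exists C, forall x, L x 0 <= C.
Proof.
move=> Lper Lc.
have cA : compact (@cube R d 0 1 `*` [set (0 : 'cV[R]_d)]).
  by apply: compact_setX; [exact: cube_compact | exact: compact_set1].
have nA : (@cube R d 0 1 `*` [set (0 : 'cV[R]_d)]) !=set0.
  by exists (0, 0); split => //= i; rewrite mxE lexx ler01.
have [c _ Hc] := compact_EVT_max nA cA (continuous_subspaceT Lc).
exists (L c.1 c.2) => x.
have [k [ik ck]] := reduce x.
have e1 : L (x - k) 0 = L x 0 := periodic_sub (Lper 0) ik.
rewrite -e1.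
by have := Hc (x - k, 0); apply; rewrite inE.
Qed.

End Periodic.
Section Integral.
Context {R : realType}.
Local Notation mu := (@lebesgue_measure R).

Lemma bounded_on (f : R -> R) (A : set R) (B : R) :
  (forall s, A s -> `|f s| <= B) -> [bounded f x | x in A].
Proof.
move=> H; exists B; split; first exact: num_real.
move=> M BM s As; apply: le_trans (H s As) _; exact: ltW.
Qed.

Lemma int_piece (a b : R) (f g : R -> R) (c e : R) : a < b -> continuous g ->
  (forall s, a <= s < b -> f s = g s) ->
  (forall s, a <= s < b -> `|g s - c| <= e) ->
  measurable_fun `[a, b[ f /\
  (\int[mu]_(s in `[a, b[) (f s)%:E <= ((b - a) * (c + e))%:E)%E.
Proof.
move=> ab gc fg gce.
have mI : measurable (`[a, b[%classic : set R) := measurable_itv _.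
have mf : measurable_fun `[a, b[ f.
  apply: (eq_measurable_fun g).
    by move=> s; rewrite inE /= in_itv /= => /fg ->.
  apply: measurable_funS (measurable_realfun.continuous_measurable_fun gc) => //.
split => //.
have fin : (mu `[a, b[ < +oo)%E.
  by rewrite lebesgue_measure_itv /= lte_fin ab /= -EFinB ltry.
have If : mu.-integrable `[a, b[ (EFin \o f).
  apply: measurable_bounded_integrable => //.
  apply: (@bounded_on _ _ (`|c| + e)) => s; rewrite /= in_itv /= => hs.
  rewrite (fg _ hs); have := gce _ hs; have := ler_normD (g s - c) c.
  rewrite subrK; lra.
have Ic : mu.-integrable `[a, b[ (EFin \o cst (c + e)).
  apply: measurable_bounded_integrable => //.
  by apply: (@bounded_on _ _ (`|c + e|)) => s _.
have H : (\int[mu]_(s in `[a, b[) (f s)%:E <= \int[mu]_(s in `[a, b[) (cst (c + e)%:E) s)%E.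
  apply: (le_integral _ If Ic); first exact: measurable_itv.
  move=> s; rewrite inE /= in_itv /= => hs; rewrite lee_fin (fg _ hs).
  by have := gce _ hs; rewrite ler_norml; lra.
apply: le_trans H _.
have hm : mu `[a, b[ = (b - a)%:E.
  by rewrite lebesgue_measure_itv /= lte_fin ab /= -EFinB.
rewrite integral_cst //.
suff H' : forall X, X = (b - a)%:E -> ((c + e)%:E * X <= ((b - a) * (c + e))%:E)%E.
  by apply: H'; exact: hm.
by move=> X ->; rewrite -EFinM mulrC.
Qed.


Lemma int_pieces (n : nat) (t : nat -> R) (f : R -> R) (G : nat -> R -> R) (c : nat -> R) (e : R) :
  t 0%N = 0 -> (forall i, (i < n)%N -> t i < t i.+1) ->
  (forall i, (i < n)%N -> continuous (G i)) ->
  (forall i s, (i < n)%N -> t i <= s < t i.+1 -> f s = G i s) ->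
  (forall i s, (i < n)%N -> t i <= s < t i.+1 -> `|G i s - c i| <= e) ->
  forall m, (m <= n)%N -> 0 <= t m /\ measurable_fun `[0, t m[ f /\
   (\int[mu]_(s in `[0%R, t m[) (f s)%:E <= (\sum_(i < m) (t i.+1 - t i) * (c i + e))%:E)%E.
Proof.
move=> t0 tinc Gc fG Gce; elim => [_|m IH mn].
  rewrite t0 set_itvco0 big_ord0 integral_set0; split => //; split => //.
  exact: measurable_fun_set0.
have mn' : (m < n)%N by [].
have [tm0 [mA IA]] := IH (ltnW mn').
have tlt := tinc m mn'.
have [mB IB] := @int_piece (t m) (t m.+1) f (G m) (c m) e tlt (Gc m mn')
   (fun s hs => fG m s mn' hs) (fun s hs => Gce m s mn' hs).
have eU : (`[0, t m.+1[%classic : set R) = `[0, t m[%classic `|` `[t m, t m.+1[%classic.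
  apply/seteqP; split => s /=; rewrite !in_itv /=.
    move=> /andP [h1 h2]; have [h3|h3] := ltP s (t m); [left|right]; apply/andP; split => //.
  by move=> [/andP [h1 h2]|/andP [h1 h2]]; apply/andP; split; lra.
have mU : measurable_fun `[0, t m.+1[ f.
  by rewrite eU; apply/measurable_funU => //; exact: measurable_itv.
split; first lra.
split => //.
rewrite eU integral_setU //; first last.
- rewrite /disj_set /=; apply/eqP/seteqP; split => s //=.
  by rewrite !in_itv /= => [[/andP [h1 h2] /andP [h3 h4]]]; lra.
- by apply/measurable_realfun.measurable_EFinP; rewrite -eU.
rewrite big_ord_recr /= EFinD.
apply: leeD => //.
Qed.

End Integral.

Section Partition.
Context {R : realType}.

Lemma t_le (n : nat) (t : nat -> R) : (forall i, (i < n)%N -> t i < t i.+1) ->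
  forall i j, (i <= j)%N -> (j <= n)%N -> t i <= t j.
Proof.
move=> tinc i j ij; elim: j ij => [|j IH].
  by rewrite leqn0 => /eqP -> _.
rewrite leq_eqVlt => /orP [/eqP -> //|ij] jn.
apply: le_trans (IH ij (ltnW jn)) _; exact/ltW/tinc.
Qed.

Lemma part_idx_eq (n : nat) (t : nat -> R) i s :
  (forall i, (i < n)%N -> t i < t i.+1) -> (i < n)%N -> t i <= s < t i.+1 ->
  part_idx n t s = i.
Proof.
move=> tinc iN /andP [h1 h2]; apply/eqP; rewrite eqn_leq; apply/andP; split.
  apply/bigmax_leqP => j tj; rewrite leqNgt; apply/negP => ij.
  have := @t_le n t tinc _ _ ij (ltnW (ltn_ord j)).
  move: tj; rewrite -/(nat_of_ord j) => tj; lra.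
by have := @leq_bigmax_cond _ (fun j : 'I_n => t j <= s) (fun j => nat_of_ord j) (Ordinal iN) h1.
Qed.

Lemma part_idx_last (n : nat) (t : nat -> R) :
  (forall i, (i < n)%N -> t i < t i.+1) -> (0 < n)%N ->
  part_idx n t (t n) = n.-1.
Proof.
move=> tinc n0; apply/eqP; rewrite eqn_leq; apply/andP; split.
  apply/bigmax_leqP => j _; rewrite -ltnS prednK //; exact: ltn_ord.
have nn : (n.-1 < n)%N by rewrite prednK.
have h : t n.-1 <= t n by apply: (@t_le n t tinc) => //; exact: leq_pred.
exact: (@leq_bigmax_cond _ (fun j : 'I_n => t j <= t n) (fun j => nat_of_ord j) (Ordinal nn) h).
Qed.

End Partition.

Lemma G_cont {R : realType} {d : nat} (L : 'cV[R]_d -> 'cV[R]_d -> R) :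
  continuous (fun z : 'cV[R]_d * 'cV[R]_d => L z.1 z.2) ->
  forall (X v : 'cV[R]_d) (c : R), continuous (fun s : R => L (X + (s - c) *: v) v).
Proof.
move=> Lc X v c s.
have -> : (fun s : R => L (X + (s - c) *: v) v) =
   (fun z : 'cV[R]_d * 'cV[R]_d => L z.1 z.2) \o (fun s : R => (X + (s - c) *: v, v)) by [].
apply: continuous_comp; last exact: Lc.
apply: (@cvg_pair _ _ _ (nbhs s) (nbhs (X + (s - c) *: v)) (nbhs v) _ _ _ (fun s => X + (s - c) *: v) (fun=> v)); last exact: cvg_cst.
apply: (@cvgD _ _ _ (nbhs s) _ (fun=> X) (fun s => (s - c) *: v)); first exact: cvg_cst.
apply: (@cvgZr_tmp _ _ _ (nbhs s) _ (fun s => s - c)).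
apply: (@cvgB _ _ _ (nbhs s) _ id (fun=> c)); [exact: cvg_id | exact: cvg_cst].
Qed.
Section Main.
Context {R : realType} {d : nat}.
Variables (L : 'cV[R]_d -> 'cV[R]_d -> R) (phi : 'cV[R]_d -> R) (Hbar : R)
  (b vv : R -> 'cV[R]_d -> 'cV[R]_d) (K : R).
Hypothesis K0 : 0 <= K.
Hypothesis Lip : forall x y, `|phi x - phi y| <= K * enorm (x - y).
Hypothesis Hmy : forall k x, 0 < k ->
     phi (x + b k x) + (enorm (b k x)) ^+ 2 / (2 * k ^+ 2) = moreau_yosida phi k x.
Hypothesis Hvv : forall k x, 0 < k ->
     vv k x \in Argmax (fun v => - pair_rv (p_of b k x) v - L (x + b k x) v).
Hypothesis Hsup : supersolution L phi Hbar.

Definition Phi k x := phi (x + b k x) + (enorm (b k x)) ^+ 2 / (2 * k ^+ 2).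

Lemma pair_scaleT (c : R) (u v : 'cV[R]_d) : pair_rv (c *: u^T) v = c * dot u v.
Proof.
rewrite /pair_rv -scalemxAl mxE mxE; congr (_ * _).
by apply: eq_bigr => j _; rewrite mxE.
Qed.

Lemma pair_p k x v : pair_rv (p_of b k x) v = - dot (b k x) v / k ^+ 2.
Proof. by rewrite /p_of pair_scaleT dotNl mulrC. Qed.

Lemma pairN (p : 'rV[R]_d) v : pair_rv (- p) v = - pair_rv p v.
Proof. by rewrite /pair_rv mulNmx mxE. Qed.

Lemma phi_lower x v : phi x - K * enorm v <= phi (x + v).
Proof.
have := Lip x (x + v); rewrite opprD addrA subrr sub0r enormN ler_norml.
move=> /andP [_ h]; lra.
Qed.

Lemma quad_lower (e k : R) : 0 < k -> - (K ^+ 2 * k ^+ 2 / 2) <= - K * e + e ^+ 2 / (2 * k ^+ 2).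
Proof.
move=> k0.
have k20 : 0 < k ^+ 2 by rewrite exprn_gt0.
have -> : - K * e + e ^+ 2 / (2 * k ^+ 2) = (e - K * k ^+ 2) ^+ 2 / (2 * k ^+ 2) - (K ^+ 2 * k ^+ 2 / 2).
  by field; rewrite gt_eqF.
rewrite lerDr; apply: divr_ge0; first exact: sqr_ge0.
by rewrite mulr_ge0 // ltW.
Qed.

Lemma min_ineq k x v : 0 < k -> Phi k x <= phi (x + v) + (enorm v) ^+ 2 / (2 * k ^+ 2).
Proof.
move=> k0; rewrite /Phi Hmy //; apply: ge_inf; last by exists v.
exists (phi x - K ^+ 2 * k ^+ 2 / 2) => _ [w _ <-].
have := phi_lower x w; have := @quad_lower (enorm w) k k0; lra.
Qed.

Lemma Phi_le_phi k x : 0 < k -> Phi k x <= phi x.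
Proof. by move=> k0; have := min_ineq k x 0 k0; rewrite addr0 enorm0 expr0n /= mul0r addr0. Qed.

Lemma b_bound k x : 0 < k -> enorm (b k x) <= 2 * K * k ^+ 2.
Proof.
move=> k0; have := Phi_le_phi k x k0; rewrite /Phi.
have := phi_lower x (b k x).
set e := enorm (b k x); have e0 : 0 <= e := enorm_ge0 _.
have k20 : 0 < k ^+ 2 by rewrite exprn_gt0.
set c := k ^+ 2 => h1 h2.
have h3 : e ^+ 2 / (2 * c) <= K * e by lra.
have h4 : e ^+ 2 <= 2 * c * (K * e).
  by rewrite -ler_pdivrMl ?mulr_gt0 // mulrC.
have [->|ep] := eqVneq e 0; first by rewrite !mulr_ge0 // ltW.
have ep' : 0 < e by rewrite lt_def ep e0.
rewrite -(ler_pM2r ep'); nra.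
Qed.

Lemma phi_le_Phi k x : 0 < k -> phi x <= Phi k x + K ^+ 2 * k ^+ 2 / 2.
Proof.
move=> k0; rewrite /Phi.
have := phi_lower x (b k x); have := @quad_lower (enorm (b k x)) k k0.
have := Lip x (x + b k x); rewrite opprD addrA subrr sub0r enormN ler_norml.
move=> /andP [_ h]; lra.
Qed.

Lemma descent k x h w : 0 < k ->
  Phi k (x + h *: w) <= Phi k x - h * dot (b k x) w / k ^+ 2 + h ^+ 2 * enorm w ^+ 2 / (2 * k ^+ 2).
Proof.
move=> k0; have := min_ineq k (x + h *: w) (b k x - h *: w) k0.
rewrite addrA addrAC addrK => H; apply: le_trans H _.
rewrite /Phi enorm_expand enormN enormZ exprMn real_normK ?num_real //.
rewrite dotNr dotZr.
have k20 : 0 < k ^+ 2 by rewrite exprn_gt0.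
set c := k ^+ 2; set B := enorm (b k x) ^+ 2; set D := dot (b k x) w.
set E := enorm w ^+ 2.
rewrite le_eqVlt; apply/orP; left; apply/eqP; field; rewrite gt_eqF //.
Qed.

Lemma subgrad k x : 0 < k -> hadamard_subdiff phi (x + b k x) (p_of b k x).
Proof.
move=> k0 w e e0.
have k20 : 0 < k ^+ 2 by rewrite exprn_gt0.
set c := k ^+ 2.
set W := enorm w.
have W0 : 0 <= W := enorm_ge0 _.
set M := 2 * K + (W + 1) ^+ 2 / (2 * c) + 1.
have M0 : 0 < M.
  rewrite /M; have : 0 <= (W + 1) ^+ 2 / (2 * c) by rewrite divr_ge0 ?sqr_ge0 // mulr_ge0 // ltW.
  by move=> H; rewrite ltr_pwDr // addr_ge0 // mulr_ge0.
exists (Num.min 1 (e / M)); split; first by rewrite lt_min ltr01 divr_gt0.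
move=> h w' h0; rewrite lt_min => /andP [h1 hM] /[dup] Hw'.
rewrite lt_min => /andP [w1 wM].
set eta := Num.min 1 (e / M).
have etaM : eta * M <= e by rewrite -ler_pdivlMr // ge_min lexx orbT.
have := min_ineq k x (b k x + h *: w') k0.
rewrite /Phi addrA enorm_expand dotZr enormZ exprMn real_normK ?num_real //.
rewrite -/c => H.
have Hdiff : h * pair_rv (p_of b k x) w' - h ^+ 2 * enorm w' ^+ 2 / (2 * c)
     <= phi (x + b k x + h *: w') - phi (x + b k x).
  rewrite pair_p -/c.
  suff : phi (x + b k x) - phi (x + b k x + h *: w') <=
     (2 * (h * dot (b k x) w') + h ^+ 2 * enorm w' ^+ 2) / (2 * c).
    have -> : h * (- dot (b k x) w' / c) - h ^+ 2 * enorm w' ^+ 2 / (2 * c) =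
      - ((2 * (h * dot (b k x) w') + h ^+ 2 * enorm w' ^+ 2) / (2 * c)).
      by field; rewrite gt_eqF.
    lra.
  have -> : (2 * (h * dot (b k x) w') + h ^+ 2 * enorm w' ^+ 2) / (2 * c) =
    (enorm (b k x) ^+ 2 + 2 * (h * dot (b k x) w') + h ^+ 2 * enorm w' ^+ 2) / (2 * c)
     - enorm (b k x) ^+ 2 / (2 * c).
    by field; rewrite gt_eqF.
  lra.
rewrite ler_pdivlMr //.
apply: le_trans Hdiff.
have Hn : enorm (w' - w) <= eta by apply: ltW.
have N0 : 0 <= enorm (w' - w) := enorm_ge0 _.
have eta0 : 0 < eta by rewrite lt_min ltr01 divr_gt0.
have Hpw : pair_rv (p_of b k x) w - pair_rv (p_of b k x) w' <= 2 * K * eta.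
  have -> : pair_rv (p_of b k x) w - pair_rv (p_of b k x) w' = dot (b k x) (w' - w) / c.
    by rewrite !pair_p -/c dotBr; field; rewrite gt_eqF.
  have := CS (b k x) (w' - w); have := b_bound k x k0.
  rewrite -/c.
  set D := dot _ _; set Bn := enorm (b k x); set N := enorm (w' - w) => hb hcs.
  have B0 : 0 <= Bn := enorm_ge0 _.
  have hD : D <= Bn * N by apply: le_trans (ler_norm _) hcs.
  rewrite ler_pdivrMr //.
  have h1' : 0 <= (2 * K * c - Bn) * N by rewrite mulr_ge0 // subr_ge0.
  have h2' : 0 <= (2 * K * c) * (eta - N) by rewrite mulr_ge0 ?subr_ge0 // mulr_ge0 // ?mulr_ge0 // ltW.
  nra.
have hw' : enorm w' <= W + 1.
  have := enormD w (w' - w); rewrite addrC subrK.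
  have : enorm (w' - w) <= 1 by apply: ltW.
  rewrite -/W; lra.
have E0 : 0 <= enorm w' := enorm_ge0 _.
have hsq : enorm w' ^+ 2 <= (W + 1) ^+ 2.
  by rewrite ler_pXn2r // nnegrE // addr_ge0.
have c2 : 0 < 2 * c by rewrite mulr_gt0.
set q := enorm w' ^+ 2 / (2 * c).
set Q := (W + 1) ^+ 2 / (2 * c).
have qQ : q <= Q by rewrite ler_pM2r // invr_gt0.
have q0 : 0 <= q by rewrite divr_ge0 ?sqr_ge0 // ltW.
have hq : h * q <= eta * Q.
  have : h <= eta by apply: ltW; rewrite /eta lt_min h1 hM.
  nra.
have eM : eta * M = 2 * K * eta + eta * Q + eta by rewrite /M /Q; ring.
have key : pair_rv (p_of b k x) w - pair_rv (p_of b k x) w' + h * q <= e.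
  lra.
have -> : h ^+ 2 * enorm w' ^+ 2 / (2 * c) = h * (h * q) by rewrite /q; ring.
nra.
Qed.

Lemma argmax_ineq k x w : 0 < k ->
  - pair_rv (p_of b k x) w - L (x + b k x) w <=
  - pair_rv (p_of b k x) (vv k x) - L (x + b k x) (vv k x).
Proof. by move=> k0; move: (Hvv k x k0); rewrite inE => /(_ w). Qed.

Lemma Hbar_le k x : 0 < k ->
  L (x + b k x) (vv k x) <= - Hbar - pair_rv (p_of b k x) (vv k x).
Proof.
move=> k0; have := (proj2 Hsup) _ _ (subgrad k x k0).
rewrite /hamiltonian => H.
suff : Hbar <= - pair_rv (p_of b k x) (vv k x) - L (x + b k x) (vv k x) by lra.
apply: le_trans H _; apply: ge_sup; first by exists (pair_rv (- p_of b k x) 0 - L (x + b k x) 0), 0.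
move=> _ [w _ <-]; rewrite pairN; exact: argmax_ineq.
Qed.

Lemma pair_p_bound k x v : 0 < k -> `|pair_rv (p_of b k x) v| <= 2 * K * enorm v.
Proof.
move=> k0; rewrite pair_p normrM normrN normrV ?unitfE ?expf_neq0 ?gt_eqF //.
have k20 : 0 < k ^+ 2 by rewrite exprn_gt0.
rewrite (ger0_norm (ltW k20)) ler_pdivrMr //.
apply: le_trans (CS _ _) _.
have := b_bound k x k0; have := enorm_ge0 v; have := enorm_ge0 (b k x); nra.
Qed.

Lemma vv_bound :
  (forall v, Zperiodic (fun x => L x v)) ->
  continuous (fun z : 'cV[R]_d * 'cV[R]_d => L z.1 z.2) ->
  (forall M : R, exists R0 : R, forall v, R0 <= enorm v ->
      forall x, M <= L x v / enorm v) ->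
  exists V, 0 <= V /\ forall k x, 0 < k -> enorm (vv k x) <= V.
Proof.
move=> Lper Lc Lsl.
have [C0 HC0] := L0_bound _ Lper Lc.
have [R0 HR0] := Lsl (2 * K + 1).
exists (Num.max (Num.max R0 1) C0); split.
  by rewrite le_max; apply/orP; left; rewrite le_max ler01 orbT.
move=> k x k0.
set e := enorm (vv k x).
have [he|he] := leP (Num.max R0 1) e; last first.
  by rewrite le_max; apply/orP; left; exact: ltW.
move: he; rewrite ge_max => /andP [hR he1].
have e0 : 0 < e by lra.
have hM := HR0 _ hR (x + b k x).
rewrite ler_pdivlMr // in hM.
have ha := argmax_ineq k x 0 k0.
have hp := pair_p_bound k x (vv k x) k0.
have p0 : pair_rv (p_of b k x) 0 = 0 by rewrite /pair_rv mulmx0 mxE.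
rewrite p0 in ha.
have hC := HC0 (x + b k x).
rewrite le_max; apply/orP; right.
move: hp; rewrite ler_norml => /andP [hp1 hp2].
rewrite -/e in hp1 hp2.
rewrite -/e in hM; lra.
Qed.


Lemma main_est :
  (forall v, Zperiodic (fun x => L x v)) ->
  continuous (fun z : 'cV[R]_d * 'cV[R]_d => L z.1 z.2) ->
  (forall M : R, exists R0 : R, forall v, R0 <= enorm v ->
      forall x, M <= L x v / enorm v) ->
  forall eps : R, 0 < eps ->
  exists k0 : R, 0 < k0 /\
  exists delta : R -> R, (forall k, 0 < k <= k0 -> 0 < delta k) /\
  forall (r : R) (k : R) (n : nat) (t : nat -> R) (y : 'cV[R]_d),
    0 < r -> 0 < k <= k0 ->
    time_partition n t r -> fineness_le n t (delta k) ->
    ((phi (motion vv k n t y r))%:E +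
     \int[@lebesgue_measure R]_(s in `[0%R, r]%classic) (L (motion vv k n t y s) (control vv k n t y s))%:E
     <= (phi y - Hbar * r + (r + 1) * eps)%:E)%E.
Proof.
move=> Lper Lc Lsl eps eps0.
have [V [V0 HV]] := vv_bound Lper Lc Lsl.
have e10 : 0 < eps / 2 by rewrite divr_gt0.
have [eta eta0 Heta] := L_uc _ Lper Lc V (eps / 2) e10.
have K4 : 0 < 4 * K + 4 by have := K0; lra.
have K21 : 0 < K ^+ 2 + 1 by rewrite ltr_pwDr // sqr_ge0.
have V1 : 0 < V + 1 by lra.
have V21 : 0 < V ^+ 2 + 1 by rewrite ltr_pwDr // sqr_ge0.
exists (Num.min 1 (Num.min (eta / (4 * K + 4)) (eps / (K ^+ 2 + 1)))); split.
  by rewrite !lt_min ltr01 !divr_gt0.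
exists (fun k => Num.min (eta / (2 * (V + 1))) (eps * k ^+ 2 / (V ^+ 2 + 1))); split.
  move=> k /andP [kp _]; rewrite lt_min !divr_gt0 ?mulr_gt0 ?exprn_gt0 //.
move=> r k n t y r0 /andP [kp]; rewrite !le_min => /andP [hk1 /andP [hk2 hk3]].
move=> [t0 [tn tinc]].
set delta := Num.min (eta / (2 * (V + 1))) (eps * k ^+ 2 / (V ^+ 2 + 1)) => fine.
have hd1 : delta <= eta / (2 * (V + 1)) by rewrite ge_min lexx.
have hd2 : delta <= eps * k ^+ 2 / (V ^+ 2 + 1) by rewrite ge_min lexx orbT.
have k20 : 0 < k ^+ 2 by rewrite exprn_gt0.
have k2k : k ^+ 2 <= k by rewrite expr2 ger_pMr.
have hK : 2 * K * k ^+ 2 < eta / 2.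
  have : K * k <= K * (eta / (4 * K + 4)) by rewrite ler_wpM2l.
  have : K * (eta / (4 * K + 4)) * (4 * K + 4) = K * eta by field; rewrite gt_eqF.
  have : K * k ^+ 2 <= K * k by rewrite ler_wpM2l.
  have : 0 <= K * (eta / (4 * K + 4)) by rewrite mulr_ge0 // divr_ge0 // ltW.
  nra.
have hdV : delta * V < eta / 2.
  have : delta * V <= eta / (2 * (V + 1)) * V by rewrite ler_wpM2r.
  have : eta / (2 * (V + 1)) * (2 * (V + 1)) = eta by field; rewrite gt_eqF.
  have : 0 < eta / (2 * (V + 1)) by rewrite divr_gt0 // mulr_gt0.
  nra.
have d0 : 0 < delta by rewrite lt_min !divr_gt0 ?mulr_gt0.
have hdV2 : delta * V ^+ 2 / (2 * k ^+ 2) <= eps / 2.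
  rewrite ler_pdivrMr ?mulr_gt0 //.
  have : delta * V ^+ 2 <= eps * k ^+ 2 / (V ^+ 2 + 1) * V ^+ 2 by rewrite ler_wpM2r // sqr_ge0.
  have : eps * k ^+ 2 / (V ^+ 2 + 1) * (V ^+ 2 + 1) = eps * k ^+ 2 by field; rewrite gt_eqF.
  have : 0 <= eps * k ^+ 2 / (V ^+ 2 + 1) by apply: divr_ge0; [rewrite mulr_ge0 // ltW | exact: ltW].
  have := sqr_ge0 V.
  nra.
have hKk : K ^+ 2 * k ^+ 2 / 2 <= eps.
  have : K ^+ 2 * k <= K ^+ 2 * (eps / (K ^+ 2 + 1)) by rewrite ler_wpM2l ?sqr_ge0.
  have : eps / (K ^+ 2 + 1) * (K ^+ 2 + 1) = eps by field; rewrite gt_eqF.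
  have : K ^+ 2 * k ^+ 2 <= K ^+ 2 * k by rewrite ler_wpM2l ?sqr_ge0.
  have : 0 <= eps / (K ^+ 2 + 1) by rewrite divr_ge0 // ltW.
  have := sqr_ge0 K.
  nra.
case: n tn tinc fine => [|n] tn tinc fine.
  by move: r0; rewrite -tn t0 ltxx.
set X := nodes vv k t y.
have Hpt : forall i s, (i < n.+1)%N -> t i <= s < t i.+1 ->
    motion vv k n.+1 t y s = X i + (s - t i) *: vv k (X i) /\
    control vv k n.+1 t y s = vv k (X i).
  by move=> i s iN hs; rewrite /motion /control (@part_idx_eq R n.+1 t i s tinc iN hs).
have Hclose : forall i s, (i < n.+1)%N -> t i <= s < t i.+1 ->
    `|L (X i + (s - t i) *: vv k (X i)) (vv k (X i)) - L (X i + b k (X i)) (vv k (X i))| <= eps / 2.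
  move=> i s iN /andP [h1 h2].
  rewrite distrC; apply: ltW; apply: Heta; first exact: HV.
  have hf := fine i iN.
  rewrite opprD addrACA subrr add0r.
  apply: le_lt_trans (enormD _ _) _.
  rewrite enormN enormZ.
  have := HV k (X i) kp; have := b_bound k (X i) kp; have := enorm_ge0 (vv k (X i)).
  rewrite ger0_norm ?subr_ge0 //.
  have : s - t i <= delta by lra.
  nra.
have := @int_pieces R n.+1 t (fun s => L (motion vv k n.+1 t y s) (control vv k n.+1 t y s))
  (fun i s => L (X i + (s - t i) *: vv k (X i)) (vv k (X i)))
  (fun i => L (X i + b k (X i)) (vv k (X i))) (eps / 2) t0 tinc
  (fun i _ => G_cont _ Lc _ _ _)
  (fun i s iN hs => ltac:(by have [-> ->] := Hpt i s iN hs))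
  Hclose n.+1 (leqnn _).
rewrite tn => [[_ [mF IF]]].
rewrite -integral_itv_bndo_bndc; last exact/measurable_realfun.measurable_EFinP.
set S := \sum_(i < n.+1) _ in IF.
have HS : forall m, (m <= n.+1)%N ->
   \sum_(i < m) (t i.+1 - t i) * (L (X i + b k (X i)) (vv k (X i)) + eps / 2) + Phi k (X m)
     <= Phi k y - Hbar * t m + t m * eps.
  elim => [_|m IH mN].
    by rewrite big_ord0 t0 /= add0r mulr0 mul0r subr0 addr0.
  have mN' : (m < n.+1)%N by [].
  have := IH (ltnW mN'); rewrite big_ord_recr /=.
  have hX : X m.+1 = X m + (t m.+1 - t m) *: vv k (X m) by [].
  rewrite hX.
  set h := t m.+1 - t m; set v := vv k (X m).
  have h0 : 0 <= h by rewrite subr_ge0 ltW // tinc.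
  have hdel : h <= delta := fine m mN'.
  have hdes := descent k (X m) h v kp.
  have hH := Hbar_le k (X m) kp; rewrite pair_p -/v in hH.
  set D := dot (b k (X m)) v in hdes hH.
  set c := L (X m + b k (X m)) v in hH *.
  have p1 : h * c <= h * (- Hbar - - D / k ^+ 2) by rewrite ler_wpM2l.
  have hv : enorm v ^+ 2 <= V ^+ 2.
    by rewrite ler_pXn2r ?nnegrE ?enorm_ge0 // HV.
  have hq : h * enorm v ^+ 2 / (2 * k ^+ 2) <= eps / 2.
    apply: le_trans hdV2; rewrite ler_pM2r ?invr_gt0 ?mulr_gt0 //.
    apply: le_trans (_ : delta * enorm v ^+ 2 <= _).
      by rewrite ler_wpM2r // sqr_ge0.
    by rewrite ler_wpM2l // ltW.
  have p2 : h * (h * enorm v ^+ 2 / (2 * k ^+ 2)) <= h * (eps / 2) by rewrite ler_wpM2l.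
  have e1 : h ^+ 2 * enorm v ^+ 2 / (2 * k ^+ 2) = h * (h * enorm v ^+ 2 / (2 * k ^+ 2)) by ring.
  have e2 : h * (- Hbar - - D / k ^+ 2) = - Hbar * h + h * D / k ^+ 2 by ring.
  have e3 : h * c = c * h by ring.
  rewrite e1 in hdes; rewrite e2 in p1.
  have tm1 : t m.+1 = t m + h by rewrite /h; ring.
  rewrite tm1.
  move=> IH'.
  nra.
have HSn := HS n.+1 (leqnn _).
rewrite -tn in HSn IF *.
have hm : motion vv k n.+1 t y (t n.+1) = X n.+1.
  by rewrite /motion (@part_idx_last R n.+1 t tinc) //.
rewrite hm.
have h1 := phi_le_Phi k (X n.+1) kp.
have h2 := Phi_le_phi k y kp.
apply: le_trans (leeD (lexx _) IF) _.
rewrite -EFinD lee_fin.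
rewrite -/S in HSn.
lra.
Qed.

End Main.

Theorem theorem1 (R : realType) (d : nat)
  (L : 'cV[R]_d -> 'cV[R]_d -> R) (phi : 'cV[R]_d -> R) (Hbar : R)
  (b vv : R -> 'cV[R]_d -> 'cV[R]_d) :
  (* L is continuous on T^d x R^d *)
  (forall v, Zperiodic (fun x => L x v)) ->
  continuous (fun z : 'cV[R]_d * 'cV[R]_d => L z.1 z.2) ->
  (* superlinearity: lim_{|v|->oo} inf_x L(x,v)/|v| = +oo *)
  (forall M : R, exists R0 : R, forall v, R0 <= enorm v ->
      forall x, M <= L x v / enorm v) ->
  (* phi : T^d -> R Lipschitz *)
  Zperiodic phi ->
  (exists K : R, forall x y, `|phi x - phi y| <= K * enorm (x - y)) ->
  supersolution L phi Hbar ->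
  (* chosen minimizers b_k[x] of the Moreau-Yosida transform *)
  (forall k, 0 < k -> Zperiodic (b k)) ->
  (forall k x, 0 < k ->
     phi (x + b k x) + (enorm (b k x)) ^+ 2 / (2 * k ^+ 2) = moreau_yosida phi k x) ->
  (* chosen maximizers vv_k[x] *)
  (forall k, 0 < k -> Zperiodic (vv k)) ->
  (forall k x, 0 < k ->
     vv k x \in Argmax (fun v => - pair_rv (p_of b k x) v - L (x + b k x) v)) ->
  forall eps : R, 0 < eps ->
  exists k0 : R, 0 < k0 /\
  exists delta : R -> R, (forall k, 0 < k <= k0 -> 0 < delta k) /\
  forall (r : R) (k : R) (n : nat) (t : nat -> R) (y : 'cV[R]_d),
    0 < r -> 0 < k <= k0 ->
    time_partition n t r -> fineness_le n t (delta k) ->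
    ((phi (motion vv k n t y r))%:E +
     \int[@lebesgue_measure R]_(s in `[0%R, r]%classic) (L (motion vv k n t y s) (control vv k n t y s))%:E
     <= (phi y - Hbar * r + (r + 1) * eps)%:E)%E.
Proof.
move=> Lper Lc Lsl phiper [K Lip] Hsup bper Hmy vvper Hvv eps eps0.
have K0 : 0 <= Num.max K 0 by rewrite le_max lexx orbT.
have Lip' : forall x y, `|phi x - phi y| <= Num.max K 0 * enorm (x - y).
  move=> x y; apply: le_trans (Lip x y) _; apply: ler_wpM2r; first exact: enorm_ge0.
  by rewrite le_max lexx.
exact: (@main_est R d L phi Hbar b vv (Num.max K 0) K0 Lip' Hmy Hvv Hsup Lper Lc Lsl eps eps0).
Qed.
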